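(* Let $a,b$ be distinct elements of $\{6,7,8\}$. Suppose $G$ is a planar graph with no cycles of length $4$, $a$, $b$ or $9$, $s\ge1$, $H$ is a cover of $G$ with respect to $L(v)=\{1,\dots,s\}$ for all $v$, and $F=(f_1,\dots,f_s)$ with $f_i(v)\in\{0,1,2\}$ and $f_1(v)+\cdots+f_s(v)\ge 3$ for all $v$, such that $(G,H)$ has no DP-$F$-coloring, and suppose $|V(G)|$ is minimum among all such $(G,H,F)$ (a minimal counterexample). Then every vertex of $G$ has degree at least $3$.
   Context: A cover $H$ of $G$ w.r.t. $L$ has vertex set $\{(u,c):c\in L(u)\}$, each $\{u\}\times L(u)$ is a clique, for each edge $uv$ the edges between $\{u\}\times L(u)$ and $\{v\}\times L(v)$ form a matching, and there are no such edges for non-adjacent $u,v$. A representative set contains exactly one vertex of each $\{v\}\times L(v)$. A DP-$F$-coloring of $(G,H)$ is a representative set $R$ admitting an ordering in which each $(v,i)\in R$ has fewer than $f_i(v)$ $H$-neighbors among earlier elements of $R$. *)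

(* Defs.v *)
From Stdlib Require Import Reals.
From mathcomp Require Import all_boot.
Set Implicit Arguments. Unset Strict Implicit. Unset Printing Implicit Defensive.

Definition simple_graph (T : finType) (e : rel T) : Prop :=
  symmetric e /\ irreflexive e.

Definition has_cycle_of_length (T : finType) (e : rel T) (k : nat) : Prop :=
  3 <= k /\ exists s : seq T, [/\ size s = k, uniq s & cycle e s].

Definition degree (T : finType) (e : rel T) (v : T) : nat := #|[pred u | e v u]|.

Local Open Scope R_scope.

Definition in01 (t : R) : Prop := 0 <= t <= 1.
Definition open01 (t : R) : Prop := 0 < t < 1.

Definition cont01 (g : R -> R * R) : Prop :=
  forall t, in01 t -> forall eps, 0 < eps -> exists delta, 0 < delta /\
    forall t', in01 t' -> Rabs (t - t') < delta ->
      Rabs (fst (g t) - fst (g t')) < eps /\ Rabs (snd (g t) - snd (g t')) < eps.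

Definition planar (T : finType) (e : rel T) : Prop :=
  exists (pos : T -> R * R) (gamma : T -> T -> R -> R * R),
    injective pos /\
    (forall u v, e u v ->
       [/\ cont01 (gamma u v), gamma u v 0 = pos u, gamma u v 1 = pos v,
           (forall t t', in01 t -> in01 t' -> gamma u v t = gamma u v t' -> t = t')
         & (forall t w, open01 t -> gamma u v t <> pos w)]) /\
    (forall u v x y, e u v -> e x y ->
       ~ ((u = x /\ v = y) \/ (u = y /\ v = x)) ->
       forall t t', open01 t -> open01 t' -> gamma u v t <> gamma x y t').

Local Close Scope R_scope.

(* Colours 1..s are represented by 'I_s (0-based).  H is a graph on the
   vertex set {(u,c) : c in L(u)} = T * 'I_s. *)
Definition is_cover (T : finType) (e : rel T) (s : nat) (H : rel (T * 'I_s)) : Prop :=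
  [/\ simple_graph H,
      (forall u (c c' : 'I_s), c != c' -> H (u, c) (u, c')),
      (forall u v (c c1 c2 : 'I_s), e u v ->
          H (u, c) (v, c1) -> H (u, c) (v, c2) -> c1 = c2) &
      (forall u v (c c' : 'I_s), u != v -> ~~ e u v -> ~~ H (u, c) (v, c'))].

Definition valid_F (T : finType) (s : nat) (f : 'I_s -> T -> nat) : Prop :=
  forall v, (forall i, f i v <= 2) /\ 3 <= \sum_(i < s) f i v.

(* A representative set is given by phi : T -> 'I_s (R = {(v, phi v)}).
   It is a DP-F-coloring if some ordering ord of R (equivalently of V(G))
   gives each (v, phi v) fewer than f_{phi v}(v) H-neighbours among the
   earlier elements. *)
Definition dp_F_coloring (T : finType) (s : nat) (H : rel (T * 'I_s))
    (f : 'I_s -> T -> nat) : Prop :=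
  exists (phi : T -> 'I_s) (ord : seq T),
    perm_eq ord (enum T) /\
    forall p v q, ord = p ++ v :: q ->
      count (fun w => H (v, phi v) (w, phi w)) p < f (phi v) v.

Definition counterexample (a b : nat) (T : finType) (e : rel T) (s : nat)
    (H : rel (T * 'I_s)) (f : 'I_s -> T -> nat) : Prop :=
  [/\ simple_graph e /\ planar e,
      ~ has_cycle_of_length e 4 /\ ~ has_cycle_of_length e a /\
      ~ has_cycle_of_length e b /\ ~ has_cycle_of_length e 9,
      1 <= s,
      is_cover e H /\ valid_F f &
      ~ dp_F_coloring H f].

(* Main.v *)
Require Import Defs.
From mathcomp Require Import all_boot.

Lemma split_last (T : eqType) (P : pred T) (s : seq {x : T | P x}) (v : T) p w q :
  map val s ++ [:: v] = p ++ w :: q ->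
  (p = map val s /\ w = v) \/
  (exists p' w' q', s = p' ++ w' :: q' /\ p = map val p' /\ w = val w').
Proof.
elim: s p => [|x s IH] [|y p] //=.
- by case=> -> _; left.
- by case=> _; case: p.
- by case=> <- _; right; exists [::], x, s.
case=> <- /IH [[-> ->]|[p' [w' [q' [-> [-> ->]]]]]]; first by left.
by right; exists (x :: p'), w', q'.
Qed.

Lemma sum_bool_le1 (s : nat) (Q : 'I_s -> bool) :
  (forall c1 c2, Q c1 -> Q c2 -> c1 = c2) -> \sum_(c < s) (Q c : nat) <= 1.
Proof.
move=> HQ.
have -> : \sum_(c < s) (Q c : nat) = #|[pred c | Q c]|.
  by rewrite -sum1_card [RHS]big_mkcond /=; apply: eq_bigr => i _; rewrite inE; case: (Q i).
by apply/card_le1_eqP => x y; rewrite !inE => /HQ H1 /H1.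
Qed.

Theorem lemma3 (a b : nat) (T : finType) (e : rel T) (s : nat)
    (H : rel (T * 'I_s)) (f : 'I_s -> T -> nat) :
  a \in [:: 6; 7; 8] -> b \in [:: 6; 7; 8] -> a != b ->
  counterexample a b e H f ->
  (forall (T' : finType) (e' : rel T') (s' : nat) (H' : rel (T' * 'I_s'))
          (f' : 'I_s' -> T' -> nat),
      counterexample a b e' H' f' -> #|T| <= #|T'|) ->
  forall v : T, 3 <= degree e v.
Proof.
move=> _ _ _ [[[esym eirr] [pos [gam [Hpos [Hg1 Hg2]]]]] [C4 [Ca [Cb C9]]] s1
  [[[Hsym Hirr] Hcl Hmat Hna] Hf] Hndp] Hmin v.
rewrite leqNgt; apply/negP => Hdeg.
pose T' := {x : T | x != v}.
pose e' : rel T' := fun x y => e (val x) (val y).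
pose H' : rel (T' * 'I_s) := fun x y => H (val x.1, x.2) (val y.1, y.2).
pose f' : 'I_s -> T' -> nat := fun i x => f i (val x).
have Hcyc : forall k, has_cycle_of_length e' k -> has_cycle_of_length e k.
  move=> k [k3 [c [sz u cy]]]; split=> //; exists (map val c); split.
  - by rewrite size_map.
  - by rewrite map_inj_uniq //; apply: val_inj.
  - by rewrite cycle_map.
have ext : dp_F_coloring H' f' -> dp_F_coloring H f.
  case=> phi' [ord' [Hperm Hord]].
  pose d : 'I_s := Ordinal s1.
  pose g0 x := if insub x is Some y then phi' y else d.
  have uord : uniq (map val ord').
    by rewrite map_inj_uniq; [rewrite (perm_uniq Hperm) enum_uniq | apply: val_inj].
  have vnot : v \notin map val ord'.
    by apply/mapP => -[y _ Hy]; move: (valP y); rewrite -Hy eqxx.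
  have bound : \sum_(c < s) count (fun w => H (v, c) (w, g0 w)) (map val ord') <= 2.
    apply: (@leq_trans (count (e v) (map val ord'))); last first.
      apply: leq_trans (ltnSE Hdeg).
      rewrite -size_filter /degree cardE.
      apply: uniq_leq_size; first by apply: filter_uniq.
      by move=> x; rewrite mem_filter mem_enum => /andP[].
    move: vnot; elim: (map val ord') => [|x l IH] /=.
      by rewrite big1.
    rewrite inE negb_or => /andP [xv /IH {}IH].
    rewrite big_split /=; apply: leq_add => //.
    case exv: (e v x).
      apply: sum_bool_le1 => c1 c2 h1 h2.
      have ex : e x v by rewrite esym.
      move: (Hmat x v (g0 x) c1 c2 ex). rewrite !(Hsym (x, _)). by apply.
    rewrite big1 // => c _.
    by rewrite (negbTE (Hna v x c (g0 x) _ _)) // ?exv // eq_sym.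
  have [c Hc] : exists c : 'I_s, count (fun w => H (v, c) (w, g0 w)) (map val ord') < f c v.
    have [c Hc|Hn] := pickP [pred c : 'I_s | count (fun w => H (v, c) (w, g0 w)) (map val ord') < f c v].
      by exists c.
    exfalso; have := (Hf v).2.
    apply/negP; rewrite -ltnNge.
    rewrite ltnS; apply: leq_trans bound; apply: leq_sum => c _.
    by move: (Hn c) => /= /negbT; rewrite -leqNgt.
  pose phi x := if x == v then c else g0 x.
  have g0val : forall y : T', g0 (val y) = phi' y.
    by move=> y; rewrite /g0 valK.
  have phival : forall y : T', phi (val y) = phi' y.
    by move=> y; rewrite /phi (negbTE (valP y)).
  exists phi, (map val ord' ++ [:: v]); split.
    apply: uniq_perm; first by rewrite cats1 rcons_uniq vnot uord.
      by apply: enum_uniq.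
    move=> x; rewrite mem_enum mem_cat inE.
    case xv: (x == v); first by rewrite orbT.
    rewrite orbF; apply/mapP; exists (Sub x (negbT xv) : T') => //.
    by rewrite (perm_mem Hperm) mem_enum.
  move=> p w q /split_last [[-> ->]|[p' [w' [q' [E [-> ->]]]]]].
    rewrite /phi eqxx -/(phi v).
    rewrite (@eq_in_count _ _ (fun w => H (v, c) (w, g0 w))) //.
    move=> x xin /=; rewrite /phi; case: eqP => // xv.
    by move: xin; rewrite xv (negbTE vnot).
  rewrite phival count_map.
  have := Hord p' w' q' E.
  congr (_ < _); apply: eq_count => y /=.
  by rewrite phival.
have cex : counterexample a b e' H' f'.
  split.
  - split.
      by split; [move=> x y; apply: esym | move=> x; apply: eirr].
    exists (fun x => pos (val x)), (fun x y => gam (val x) (val y)).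
    split; first by move=> x y /Hpos /val_inj.
    split; first by move=> x y exy; have [? ? ? ? H5] := Hg1 _ _ exy; split => // t w ht; exact: H5.
    move=> x y x' y' h1 h2 hn; apply: Hg2 h1 h2 _.
    by move=> [[/val_inj E1 /val_inj E2]|[/val_inj E1 /val_inj E2]]; apply: hn; subst; auto.
  - by split; [move/Hcyc | split; [move/Hcyc | split; move/Hcyc]].
  - exact: s1.
  - split; last by move=> x; exact: (Hf (val x)).
    split.
    + by split; [move=> x y; exact: Hsym | move=> x; exact: Hirr].
    + by move=> u c c' hc; exact: Hcl.
    + by move=> u w c c1 c2 h; exact: Hmat h.
    + by move=> u w c c' uw nuw; apply: Hna.
  - by move=> dp; apply: Hndp (ext dp).
have := Hmin _ _ _ _ _ cex.
rewrite card_sig (_ : #|[pred x | x != v]| = #|predC1 v|); last by apply: eq_card.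
rewrite cardC1.
have h0 : 0 < #|T| by apply/card_gt0P; exists v.
by case: #|T| h0 => // n _; rewrite /= ltnn.
Qed.
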